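(* Let $\beta>0$, $T>0$, $\lambda>0$, put $M=\beta T$, and let $B_M$ satisfy $0<B_M<\beta T$. Let $T_{\text{th}}=\dfrac{M}{\ln(1+M/\lambda)}$ and, for $x\ge 0$, $$P_{e|1}(x)=\sum_{y\in\mathbb{Z}_{\ge 0},\, y<T_{\text{th}}} e^{-(x+\lambda)}\frac{(x+\lambda)^y}{y!}.$$ Consider the optimization problem over real sequences $\{\Delta_i\}_{i=1}^\infty$: $$\min_{\{\Delta_i\}} F(\{\Delta_i\})=\sum_{j=1}^{\infty}\frac{1}{2^{j}}P_{e|1}(M+\Delta_j)\quad\text{s.t.}\quad B_M-\sum_{j=1}^{i}\Delta_j\ge 0\ \text{ and }\ \sum_{j=1}^{i}\Delta_j\ge 0\ \text{ for all } i\ge 1.$$ Then the optimal solution $\{\Delta^*_i\}_{i=1}^\infty$ of this problem is a decreasing (i.e. $\Delta^*_{i+1}\le \Delta^*_i$ for all $i$) sequence of nonnegative numbers.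
   Context: This is the ''no-ISI'' adaptive release-duration problem for a molecular transmitter with molecule production rate $\beta$, slot length $T$, storage capacity $B_M=\beta(T-T_M)$ (with $T_M$ the non-adaptive release duration); $\Delta_i$ is the increment of the number of released molecules (for bit ''1'') in state $s_{i-1}$, i.e. after $i-1$ consecutive ''1''s following the last ''0''. $P_{e|1}(x)$ is the probability that a Poisson$(x+\lambda)$ count falls below the fixed threshold $T_{\text{th}}$. The paper assumes $M\gg\lambda$, so that $T_{\text{th}}<M$. *)

(* Defs.v *)
From Stdlib Require Import Reals.
From Coquelicot Require Import Coquelicot.
Open Scope R_scope.

Definition Tth (M lambda : R) : R := M / ln (1 + M / lambda).

Definition Pe1 (M lambda x : R) : R :=
  Series (fun y : nat =>
    if Rlt_dec (INR y) (Tth M lambda)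
    then exp (- (x + lambda)) * (x + lambda) ^ y / INR (Factorial.fact y)
    else 0).

(* Objective F({Delta_i}) = sum_{j>=1} 2^{-j} P_{e|1}(M + Delta_j).
   Sequences are indexed from 1; Delta 0 is ignored. *)
Definition Fobj (M lambda : R) (Delta : nat -> R) : R :=
  Series (fun k : nat => (1/2) ^ (k + 1) * Pe1 M lambda (M + Delta (k + 1)%nat)).

Definition feasible (BM : R) (Delta : nat -> R) : Prop :=
  forall i : nat, (1 <= i)%nat ->
    BM - sum_n_m Delta 1 i >= 0 /\ sum_n_m Delta 1 i >= 0.

Definition optimal (M lambda BM : R) (Delta : nat -> R) : Prop :=
  feasible BM Delta /\
  forall Delta' : nat -> R, feasible BM Delta' -> Fobj M lambda Delta <= Fobj M lambda Delta'.

(* Main.v *)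
Require Import Defs.
From Stdlib Require Import Reals Lra Lia Factorial Classical.
From Coquelicot Require Import Coquelicot.
Open Scope R_scope.


Definition pm (mu : R) (y : nat) : R := exp (- mu) * mu ^ y / INR (Factorial.fact y).
Definition Q (K : nat) (mu : R) : R := sum_n (pm mu) K.

Lemma Q_S K mu : Q (S K) mu = Q K mu + pm mu (S K).
Proof. unfold Q, sum_n. rewrite sum_n_Sm; [reflexivity| lia]. Qed.

Lemma Q_deriv K mu : is_derive (Q K) mu (- pm mu K).
Proof.
  induction K.
  - apply is_derive_ext with (fun t => exp (- t)).
    + intro t. unfold Q, pm. rewrite sum_O. simpl. field.
    + auto_derive; auto. unfold pm; simpl; field.
  - apply is_derive_ext with (fun t => Q K t + exp (- t) * t ^ (S K) / INR (Factorial.fact (S K))).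
    + intro t. rewrite Q_S. reflexivity.
    + assert (H2 : is_derive (fun t => exp (- t) * t ^ (S K) / INR (Factorial.fact (S K))) mu
         (pm mu K - pm mu (S K))).
      { auto_derive.
        - auto.
        - unfold pm. rewrite fact_simpl, mult_INR, S_INR.
          assert (INR (Factorial.fact K) <> 0) by (apply not_0_INR, Factorial.fact_neq_0).
          assert (INR K + 1 <> 0) by (pose proof (pos_INR K); lra).
          replace (INR (S K)) with (INR K + 1) by (rewrite S_INR; ring).
          change (match K with 0%nat => 1 | S _ => INR K + 1 end) with (INR (S K)).
          rewrite S_INR.
          replace (INR (Factorial.fact K + K * Factorial.fact K)) with ((INR K + 1) * INR (Factorial.fact K))
            by (rewrite plus_INR, mult_INR; ring).
          simpl pow. field. split; auto. }
      pose proof (is_derive_plus _ _ _ _ _ IHK H2) as H3.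
      replace (- pm mu (S K)) with (plus (- pm mu K) (pm mu K - pm mu (S K))).
      exact H3. unfold plus; simpl. ring.
Qed.

Lemma fact_pos K : 0 < INR (Factorial.fact K).
Proof. apply lt_0_INR. apply Factorial.lt_O_fact. Qed.

Lemma pm_pos mu K : 0 < mu -> 0 < pm mu K.
Proof. intro h. unfold pm. pose proof (fact_pos K). pose proof (exp_pos (-mu)).
  pose proof (pow_lt mu K h). apply Rdiv_lt_0_compat; [nra|lra]. Qed.

Lemma pm_nonneg mu K : 0 <= mu -> 0 <= pm mu K.
Proof. intro h. unfold pm. pose proof (fact_pos K). pose proof (exp_pos (-mu)).
  pose proof (pow_le mu K h). apply Rdiv_le_0_compat; [nra|lra]. Qed.

Lemma Q_mvt K a b : a <= b -> exists c, a <= c <= b /\ Q K b - Q K a = - pm c K * (b - a).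
Proof.
  intro hab.
  destruct (MVT_gen (Q K) a b (fun x => - pm x K)) as [c [hc e]].
  - intros x _. apply Q_deriv.
  - intros x _. apply continuity_pt_filterlim. apply (ex_derive_continuous (Q K)).
    eexists. apply Q_deriv.
  - exists c. rewrite Rmin_left, Rmax_right in hc by lra. split; auto.
Qed.

Lemma Q_decr K a b : 0 < a -> a < b -> Q K b < Q K a.
Proof.
  intros ha hab. destruct (Q_mvt K a b) as [c [hc e]]; [lra|].
  pose proof (pm_pos c K ltac:(lra)). nra.
Qed.

Lemma Q_0 K : Q K 0 = 1.
Proof.
  induction K. - unfold Q, pm. rewrite sum_O. simpl. rewrite Ropp_0, exp_0. field.
  - rewrite Q_S, IHK. unfold pm. simpl. field. apply not_0_INR.
    pose proof (Factorial.lt_O_fact K). lia.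
Qed.

Lemma Q_nonneg K mu : 0 <= mu -> 0 <= Q K mu.
Proof.
  intro h. induction K.
  - unfold Q. rewrite sum_O. apply pm_nonneg; auto.
  - rewrite Q_S. pose proof (pm_nonneg mu (S K) h). lra.
Qed.

Lemma Q_le1 K mu : 0 <= mu -> Q K mu <= 1.
Proof.
  intro h. destruct (Q_mvt K 0 mu h) as [c [hc e]]. rewrite Q_0 in e.
  pose proof (pm_nonneg c K ltac:(lra)). nra.
Qed.

Lemma ln_le_sub1 x : 0 < x -> ln x <= x - 1.
Proof. intro h. pose proof (exp_ineq1_le (ln x)). rewrite exp_ln in H by auto. lra. Qed.

Lemma ln_ge x : 0 < x -> 1 - / x <= ln x.
Proof. intro h. pose proof (ln_le_sub1 (/ x) ltac:(apply Rinv_0_lt_compat; auto)).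
  rewrite ln_Rinv in H by auto. lra. Qed.

Lemma pm_exp x K : 0 < x -> pm x K = exp (- x + INR K * ln x) / INR (Factorial.fact K).
Proof. intro h. unfold pm. rewrite exp_plus. rewrite <- ln_pow by auto. rewrite exp_ln.
  reflexivity. apply pow_lt; auto. Qed.

Lemma pm_le K x y : 0 < x -> 0 < y -> - x + INR K * ln x <= - y + INR K * ln y -> pm x K <= pm y K.
Proof.
  intros hx hy h. rewrite !pm_exp by auto. unfold Rdiv. apply Rmult_le_compat_r.
  left; apply Rinv_0_lt_compat, fact_pos.
  destruct h as [h|h]. left; apply exp_increasing; auto. rewrite h; lra.
Qed.

Section G.
Variables (M lam : R) (K : nat).
Hypotheses (hM : 0 < M) (hl : 0 < lam) (hK : INR K < Tth M lam).

Lemma lnpos : 0 < ln (1 + M / lam).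
Proof. rewrite <- ln_1. apply ln_increasing. lra. assert (0 < M/lam) by (apply Rdiv_lt_0_compat; auto). lra. Qed.

Lemma Tth_le : Tth M lam <= M + lam.
Proof.
  unfold Tth. pose proof lnpos. pose proof (ln_ge (1 + M/lam)).
  assert (0 < M/lam) by (apply Rdiv_lt_0_compat; auto).
  apply Rle_trans with (M / (M/(M+lam))).
  - unfold Rdiv at 1 3. apply Rmult_le_compat_l. lra. apply Rinv_le_contravar.
    apply Rdiv_lt_0_compat; lra.
    replace (M / (M+lam)) with (1 - / (1 + M/lam)). apply H0. lra. field. split; lra.
  - right. field. split; lra.
Qed.

Lemma K_le : INR K <= M + lam.
Proof. pose proof Tth_le. lra. Qed.

Lemma K_ln : INR K * ln (1 + M / lam) <= M.
Proof.
  pose proof lnpos. unfold Tth in hK.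
  apply Rlt_le. apply (Rmult_lt_compat_r (ln (1 + M/lam))) in hK; auto.
  replace (M / ln (1 + M / lam) * ln (1 + M / lam)) with M in hK by (field; lra). auto.
Qed.

Lemma G2 t : 0 <= t -> pm (M + lam + t) K <= pm (M + lam) K.
Proof.
  intro ht. apply pm_le; try lra.
  pose proof K_le. pose proof (pos_INR K).
  assert (e: ln (M + lam + t) = ln (M+lam) + ln ((M+lam+t)/(M+lam))).
  { rewrite ln_div by lra. ring. }
  rewrite e. pose proof (ln_le_sub1 ((M+lam+t)/(M+lam)) ltac:(apply Rdiv_lt_0_compat; lra)).
  replace ((M + lam + t) / (M + lam) - 1) with (t / (M+lam)) in H1 by (field; lra).
  assert (INR K * ln ((M + lam + t) / (M + lam)) <= INR K * (t/(M+lam))).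
  { apply Rmult_le_compat_l; auto. }
  assert (INR K * (t/(M+lam)) <= t).
  { assert (0 <= t/(M+lam)) by (apply Rdiv_le_0_compat; lra).
    apply Rle_trans with ((M+lam) * (t/(M+lam))). apply Rmult_le_compat_r; auto.
    right. field. lra. }
  lra.
Qed.


Lemma G1 s : 0 <= s <= M -> pm (M + lam) K <= pm (M + lam - s) K.
Proof.
  intro hs. apply pm_le; try lra.
  pose proof (pos_INR K).
  destruct (Rle_or_lt (INR K) (M + lam - s)) as [hc|hc].
  - assert (e: ln (M + lam) = ln (M + lam - s) + ln ((M+lam)/(M+lam-s))).
    { rewrite ln_div by lra. ring. }
    rewrite e. pose proof (ln_le_sub1 ((M+lam)/(M+lam-s)) ltac:(apply Rdiv_lt_0_compat; lra)).
    replace ((M + lam) / (M + lam - s) - 1) with (s / (M+lam-s)) in H0 by (field; lra).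
    assert (INR K * ln ((M + lam) / (M + lam - s)) <= INR K * (s/(M+lam-s))).
    { apply Rmult_le_compat_l; auto. }
    assert (INR K * (s/(M+lam-s)) <= s).
    { assert (0 <= s/(M+lam-s)) by (apply Rdiv_le_0_compat; lra).
      apply Rle_trans with ((M+lam-s) * (s/(M+lam-s))). apply Rmult_le_compat_r; auto.
      right. field. lra. }
    lra.
  - assert (e1: ln (M + lam) = ln lam + ln (1 + M/lam)).
    { rewrite <- ln_mult by (try lra; assert (0 < M/lam) by (apply Rdiv_lt_0_compat; auto); lra).
      f_equal. field. lra. }
    assert (e2: ln (M + lam - s) = ln lam + ln ((M+lam-s)/lam)).
    { rewrite ln_div by lra. ring. }
    rewrite e1, e2. pose proof K_ln.
    pose proof (ln_ge ((M+lam-s)/lam) ltac:(apply Rdiv_lt_0_compat; lra)).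
    replace (1 - / ((M + lam - s) / lam)) with ((M - s) / (M+lam-s)) in H1 by (field; lra).
    assert (INR K * ((M - s) / (M+lam-s)) <= INR K * ln ((M + lam - s) / lam)).
    { apply Rmult_le_compat_l; auto. }
    assert (M - s <= INR K * ((M - s) / (M+lam-s))).
    { assert (0 <= (M-s)/(M+lam-s)) by (apply Rdiv_le_0_compat; lra).
      apply Rle_trans with ((M+lam-s) * ((M-s)/(M+lam-s))).
      right. field. lra. apply Rmult_le_compat_r; lra. }
    nra.
Qed.

End G.

Lemma K_exists T : 0 < T -> exists K, forall y, INR y < T <-> (y <= K)%nat.
Proof.
  intro hT. destruct (nfloor1_ex T hT) as [n [h1 h2]]. exists n. intro y. split.
  - intro hy. destruct (Compare_dec.le_lt_dec y n) as [l|l]; auto.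
    apply le_INR in l. rewrite S_INR in l. lra.
  - intro hy. apply le_INR in hy. lra.
Qed.

Lemma sum_n_const_after (a : nat -> R) N : (forall n, (N < n)%nat -> a n = 0) ->
  forall m, (N <= m)%nat -> sum_n a m = sum_n a N.
Proof.
  intros h m hm. induction hm. reflexivity.
  unfold sum_n in *. rewrite sum_n_Sm by lia. rewrite IHhm, h by lia.
  unfold plus, zero; simpl. ring.
Qed.

Lemma Series_finite (a : nat -> R) N : (forall n, (N < n)%nat -> a n = 0) -> Series a = sum_n a N.
Proof.
  intro h. apply is_series_unique.
  assert (H : is_lim_seq (sum_n a) (sum_n a N)).
  { apply (is_lim_seq_ext_loc (fun _ => sum_n a N)).
    - exists N. intros m hm. symmetry. apply sum_n_const_after; auto.
    - apply is_lim_seq_const. }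
  exact H.
Qed.

Lemma Pe1_Q M lam K x : (forall y, INR y < Tth M lam <-> (y <= K)%nat) ->
  Pe1 M lam x = Q K (x + lam).
Proof.
  intro hK. unfold Pe1. rewrite (Series_finite _ K).
  - unfold Q, sum_n. apply sum_n_m_ext_loc. intros y hy.
    destruct (Rlt_dec (INR y) (Tth M lam)) as [r|r]. reflexivity.
    exfalso. apply r. apply hK. lia.
  - intros n hn. destruct (Rlt_dec (INR n) (Tth M lam)) as [r|r]; auto.
    apply hK in r. lia.
Qed.

Definition Sm (D : nat -> R) (j : nat) : R := sum_n_m D 1 j.

Lemma Sm0 D : Sm D 0 = 0.
Proof. unfold Sm. rewrite sum_n_m_zero by lia. reflexivity. Qed.

Lemma SmS D j : Sm D (S j) = Sm D j + D (S j).
Proof. unfold Sm. rewrite sum_n_Sm by lia. reflexivity. Qed.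

Lemma mono_up D j m : (forall l, (j < l <= m)%nat -> 0 <= D l) -> (j <= m)%nat -> Sm D j <= Sm D m.
Proof.
  intros h hm. induction hm. lra. rewrite SmS.
  assert (0 <= D (S m)) by (apply h; lia).
  assert (Sm D j <= Sm D m) by (apply IHhm; intros; apply h; lia). lra.
Qed.

Lemma mono_down D j m : (forall l, (j < l <= m)%nat -> D l <= 0) -> (j <= m)%nat -> Sm D m <= Sm D j.
Proof.
  intros h hm. induction hm. lra. rewrite SmS.
  assert (D (S m) <= 0) by (apply h; lia).
  assert (Sm D m <= Sm D j) by (apply IHhm; intros; apply h; lia). lra.
Qed.

Lemma last_neg D p q : D p < 0 -> (p < q)%nat ->
  exists p', (p <= p' < q)%nat /\ D p' < 0 /\ forall l, (p' < l < q)%nat -> 0 <= D l.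
Proof.
  intros hp hq. induction hq.
  - exists p. split; [lia|]. split; auto. intros; lia.
  - destruct (Rlt_dec (D m) 0) as [r|r].
    + exists m. split; [lia|]. split; auto. intros; lia.
    + destruct IHhq as [p' [h1 [h2 h3]]]. exists p'. split; [lia|]. split; auto.
      intros l hl. destruct (Nat.eq_dec l m). subst; lra. apply h3; lia.
Qed.

Definition modD (D : nat -> R) p q u v : nat -> R :=
  fun l => D l + (if Nat.eqb l p then u else 0) + (if Nat.eqb l q then v else 0).

Lemma Sm_mod D p q u v j : (1 <= p)%nat -> (1 <= q)%nat ->
  Sm (modD D p q u v) j = Sm D j + (if Nat.leb p j then u else 0) + (if Nat.leb q j then v else 0).
Proof.
  intros hp hq. induction j.
  - rewrite !Sm0. destruct (Nat.leb_spec p 0); try lia. destruct (Nat.leb_spec q 0); try lia. ring.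
  - rewrite !SmS, IHj. unfold modD.
    destruct (Nat.leb_spec p j); destruct (Nat.leb_spec p (S j)); destruct (Nat.eqb_spec (S j) p);
    destruct (Nat.leb_spec q j); destruct (Nat.leb_spec q (S j)); destruct (Nat.eqb_spec (S j) q);
    try lia; ring.
Qed.

Lemma sum_two (d : nat -> R) a b : a <> b -> (forall l, l <> a -> l <> b -> d l = 0) ->
  forall n, sum_n d n = (if Nat.leb a n then d a else 0) + (if Nat.leb b n then d b else 0).
Proof.
  intros hab h n. induction n.
  - unfold sum_n. rewrite sum_n_n. change (d 0%nat = (if a <=? 0 then d a else 0) + (if b <=? 0 then d b else 0)).
    destruct (Nat.leb_spec a 0); destruct (Nat.leb_spec b 0); try lia.
    + assert (a = 0)%nat by lia. subst. ring.
    + assert (b = 0)%nat by lia. subst. ring.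
    + rewrite h by lia. ring.
  - unfold sum_n in *. rewrite sum_n_Sm by lia. rewrite IHn. unfold plus; simpl.
    destruct (Nat.leb_spec a n); destruct (Nat.leb_spec a (S n));
    destruct (Nat.leb_spec b n); destruct (Nat.leb_spec b (S n)); try lia.
    all: first [ rewrite (h (S n)) by lia; ring | (assert (b = S n) by lia; subst; ring) | (assert (a = S n) by lia; subst; ring) ].
Qed.

Section E.
Variables (M lam BM : R) (K : nat).
Hypotheses (hM : 0 < M) (hl : 0 < lam) (hB0 : 0 < BM) (hB1 : BM < M)
  (hK : forall y, INR y < Tth M lam <-> (y <= K)%nat).

Lemma feas_S D : feasible BM D -> forall j, 0 <= Sm D j <= BM.
Proof.
  intros hf j. destruct j. rewrite Sm0. lra.
  destruct (hf (S j) ltac:(lia)) as [h1 h2]. unfold Sm. lra.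
Qed.

Lemma feas_D D : feasible BM D -> forall l, (1 <= l)%nat -> - BM <= D l <= BM.
Proof.
  intros hf l hl'. destruct l. lia. pose proof (SmS D l).
  pose proof (feas_S D hf l). pose proof (feas_S D hf (S l)). lra.
Qed.

Lemma Pe1_bounds D : feasible BM D -> forall l, (1 <= l)%nat ->
  0 <= Pe1 M lam (M + D l) <= 1.
Proof.
  intros hf l hl'. rewrite (Pe1_Q M lam K) by auto. pose proof (feas_D D hf l hl').
  split. apply Q_nonneg; lra. apply Q_le1; lra.
Qed.

Lemma ex_F D : feasible BM D ->
  ex_series (fun k : nat => (1/2) ^ (k + 1) * Pe1 M lam (M + D (k + 1)%nat)).
Proof.
  intro hf.
  apply (ex_series_le (K := R_AbsRing) (V := R_CompleteNormedModule) _ (fun k : nat => (1/2) * (1/2) ^ k)).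
  - intro n. pose proof (Pe1_bounds D hf (n+1) ltac:(lia)).
    assert (0 < (1/2) ^ (n+1)) by (apply pow_lt; lra).
    change (norm ((1/2) ^ (n + 1) * Pe1 M lam (M + D (n + 1)%nat))) with
      (Rabs ((1/2) ^ (n + 1) * Pe1 M lam (M + D (n + 1)%nat))).
    rewrite Rabs_pos_eq by (apply Rmult_le_pos; lra). rewrite pow_add. simpl.
    rewrite pow_add in H0. simpl in H0. nra.
  - apply (ex_series_scal_l (V := R_NormedModule) (1/2) (fun k => (1/2)^k)).
    eexists. apply is_series_geom. rewrite Rabs_pos_eq; lra.
Qed.

Lemma Fdiff D D' p q : feasible BM D -> feasible BM D' -> p <> q -> (1 <= p)%nat -> (1 <= q)%nat ->
  (forall l, l <> p -> l <> q -> D' l = D l) ->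
  Fobj M lam D' - Fobj M lam D =
  (1/2) ^ p * (Pe1 M lam (M + D' p) - Pe1 M lam (M + D p)) +
  (1/2) ^ q * (Pe1 M lam (M + D' q) - Pe1 M lam (M + D q)).
Proof.
  intros hf hf' hpq hp hq he. unfold Fobj.
  rewrite <- Series_minus by (apply ex_F; auto).
  set (d := fun n : nat => (1 / 2) ^ (n + 1) * Pe1 M lam (M + D' (n + 1)%nat) -
     (1 / 2) ^ (n + 1) * Pe1 M lam (M + D (n + 1)%nat)).
  assert (hd : forall l, l <> (p - 1)%nat -> l <> (q - 1)%nat -> d l = 0).
  { intros l h1 h2. unfold d. rewrite he by lia. ring. }
  rewrite (Series_finite d (p + q)).
  - rewrite (sum_two d (p-1) (q-1)) by (auto; lia).
    destruct (Nat.leb_spec (p-1) (p+q)); try lia. destruct (Nat.leb_spec (q-1) (p+q)); try lia.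
    unfold d. replace (p - 1 + 1)%nat with p by lia. replace (q - 1 + 1)%nat with q by lia. ring.
  - intros n hn. apply hd; lia.
Qed.

Lemma improve D D' p q : optimal M lam BM D -> feasible BM D' -> p <> q -> (1 <= p)%nat -> (1 <= q)%nat ->
  (forall l, l <> p -> l <> q -> D' l = D l) ->
  (1/2) ^ p * (Pe1 M lam (M + D' p) - Pe1 M lam (M + D p)) +
  (1/2) ^ q * (Pe1 M lam (M + D' q) - Pe1 M lam (M + D q)) < 0 -> False.
Proof.
  intros [hf ho] hf' hpq hp hq he hlt. rewrite <- (Fdiff D D' p q) in hlt by auto.
  specialize (ho D' hf'). lra.
Qed.

End E.

Lemma half_pow_lt p q : (p < q)%nat -> (1/2) ^ q < (1/2) ^ p.
Proof.
  intro h. replace q with (p + (q - p))%nat by lia. rewrite pow_add.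
  pose proof (pow_lt_1_compat (1/2) (q - p) ltac:(lra) ltac:(lia)).
  pose proof (pow_lt (1/2) p ltac:(lra)). nra.
Qed.

Section F.
Variables (M lam BM : R) (K : nat).
Hypotheses (hM : 0 < M) (hl : 0 < lam) (hB0 : 0 < BM) (hB1 : BM < M)
  (hK : forall y, INR y < Tth M lam <-> (y <= K)%nat).

Lemma Kreal : INR K < Tth M lam.
Proof. apply hK. lia. Qed.

Lemma eqb_self n : Nat.eqb n n = true.
Proof. apply Nat.eqb_refl. Qed.

Lemma nonneg D : optimal M lam BM D -> forall i, (1 <= i)%nat -> 0 <= D i.
Proof.
  intros ho i hi. destruct (Rle_or_lt 0 (D i)) as [h|hneg]; auto. exfalso.
  pose proof (proj1 ho) as hf.
  destruct (classic (exists q, (i < q)%nat /\ 0 < D q)) as [[q [hq hDq]] | hnq].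
  - destruct (last_neg D i q hneg hq) as [p [hp1 [hp2 hp3]]].
    set (eps := Rmin (- D p) (D q)).
    assert (he1 : eps <= - D p) by apply Rmin_l.
    assert (he2 : eps <= D q) by apply Rmin_r.
    assert (he0 : 0 < eps) by (apply Rmin_glb_lt; lra).
    apply (improve M lam BM K hl hB0 hB1 hK D (modD D p q eps (- eps)) p q ho); try lia.
    + intros j hj. change (sum_n_m (modD D p q eps (- eps)) 1 j) with (Sm (modD D p q eps (- eps)) j).
      rewrite Sm_mod by lia. pose proof (feas_S BM hB0 D hf j).
      destruct (Nat.leb_spec p j); destruct (Nat.leb_spec q j); try lra; try lia.
      assert (Sm D j <= Sm D (q - 1)).
      { apply mono_up; try lia. intros l hl'. apply hp3. lia. }
      pose proof (SmS D (q-1)) as hS. replace (S (q-1)) with q in hS by lia.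
      pose proof (feas_S BM hB0 D hf q). lra.
    + intros l h1 h2. unfold modD. destruct (Nat.eqb_spec l p); try lia.
      destruct (Nat.eqb_spec l q); try lia. ring.
    + unfold modD. rewrite eqb_self. destruct (Nat.eqb_spec p q); try lia.
      destruct (Nat.eqb_spec q p); try lia. rewrite eqb_self.
      rewrite !(Pe1_Q M lam K) by auto.
      pose proof (feas_D BM hB0 D hf p ltac:(lia)).
      pose proof (feas_D BM hB0 D hf q ltac:(lia)).
      destruct (Q_mvt K (M + D p + lam) (M + D p + lam + eps)) as [c1 [hc1 e1]]; [lra|].
      destruct (Q_mvt K (M + D q + lam - eps) (M + D q + lam)) as [c2 [hc2 e2]]; [lra|].
      replace (M + (D p + eps + 0) + lam) with (M + D p + lam + eps) by ring.
      replace (M + (D q + 0 + - eps) + lam) with (M + D q + lam - eps) by ring.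
      replace (M + D p + lam) with (M + D p + lam) by ring.
      replace (M + D p + lam + eps - (M + D p + lam)) with eps in e1 by ring.
      replace (M + D q + lam - (M + D q + lam - eps)) with eps in e2 by ring.
      assert (g1 : pm (M + lam) K <= pm c1 K).
      { replace c1 with (M + lam - (M + lam - c1)) by ring. apply G1; [lra|lra|apply hK; lia|lra]. }
      assert (g2 : pm c2 K <= pm (M + lam) K).
      { replace c2 with (M + lam + (c2 - (M + lam))) by ring. apply G2; [lra|lra|apply hK; lia|lra]. }
      pose proof (pm_pos (M + lam) K ltac:(lra)).
      pose proof (half_pow_lt p q ltac:(lia)).
      pose proof (pow_lt (1/2) q ltac:(lra)).
      assert (A1 : (1/2)^q * pm c2 K < (1/2)^p * pm c1 K).
      { apply Rle_lt_trans with ((1/2)^q * pm (M+lam) K). apply Rmult_le_compat_l; lra.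
        apply Rlt_le_trans with ((1/2)^p * pm (M+lam) K). apply Rmult_lt_compat_r; lra.
        apply Rmult_le_compat_l; lra. }
      replace (Q K (M + D p + lam + eps) - Q K (M + D p + lam)) with (- pm c1 K * eps) by lra.
      replace (Q K (M + D q + lam - eps) - Q K (M + D q + lam)) with (pm c2 K * eps) by lra.
      nra.
  - assert (hall : forall q, (i < q)%nat -> D q <= 0).
    { intros q hq. destruct (Rle_or_lt (D q) 0); auto. exfalso. apply hnq. exists q; auto. }
    apply (improve M lam BM K hl hB0 hB1 hK D (modD D i (S i) (- D i) 0) i (S i) ho); try lia.
    + intros j hj. change (sum_n_m (modD D i (S i) (- D i) 0) 1 j) with (Sm (modD D i (S i) (- D i) 0) j).
      rewrite Sm_mod by lia. pose proof (feas_S BM hB0 D hf j).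
      destruct (Nat.leb_spec i j); destruct (Nat.leb_spec (S i) j); try lra; try lia.
      * assert (Sm D j <= Sm D i).
        { apply mono_down; try lia. intros l hl'. apply hall. lia. }
        pose proof (SmS D (i-1)) as hS. replace (S (i-1)) with i in hS by lia.
        pose proof (feas_S BM hB0 D hf (i-1)). lra.
      * assert (j = i) by lia. subst j.
        pose proof (SmS D (i-1)) as hS. replace (S (i-1)) with i in hS by lia.
        pose proof (feas_S BM hB0 D hf (i-1)). lra.
    + intros l h1 h2. unfold modD. destruct (Nat.eqb_spec l i); try lia.
      destruct (Nat.eqb_spec l (S i)); try lia. ring.
    + unfold modD. rewrite !eqb_self. destruct (Nat.eqb_spec i (S i)); try lia.
      destruct (Nat.eqb_spec (S i) i); try lia.
      rewrite !(Pe1_Q M lam K) by auto.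
      pose proof (feas_D BM hB0 D hf i ltac:(lia)).
      replace (M + (D i + - D i + 0) + lam) with (M + lam) by ring.
      replace (M + (D (S i) + 0 + 0) + lam) with (M + D (S i) + lam) by ring.
      pose proof (Q_decr K (M + D i + lam) (M + lam) ltac:(lra) ltac:(lra)).
      pose proof (pow_lt (1/2) i ltac:(lra)).
      replace (M + D i + lam) with (M + D i + lam) by ring. nra.
Qed.

Lemma decr D : optimal M lam BM D -> forall i, (1 <= i)%nat -> D (S i) <= D i.
Proof.
  intros ho i hi. destruct (Rle_or_lt (D (S i)) (D i)) as [h|hlt]; auto. exfalso.
  pose proof (proj1 ho) as hf.
  pose proof (nonneg D ho) as hnn.
  set (u := D (S i) - D i).
  apply (improve M lam BM K hl hB0 hB1 hK D (modD D i (S i) u (- u)) i (S i) ho); try lia.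
  - intros j hj. change (sum_n_m (modD D i (S i) u (- u)) 1 j) with (Sm (modD D i (S i) u (- u)) j).
    rewrite Sm_mod by lia. pose proof (feas_S BM hB0 D hf j).
    destruct (Nat.leb_spec i j); destruct (Nat.leb_spec (S i) j); try lra; try lia.
    assert (j = i) by lia. subst j.
    pose proof (SmS D (i-1)) as hS. replace (S (i-1)) with i in hS by lia.
    pose proof (SmS D i). pose proof (feas_S BM hB0 D hf (i-1)).
    pose proof (feas_S BM hB0 D hf (S i)). pose proof (hnn i hi). pose proof (hnn (S i) ltac:(lia)).
    unfold u. lra.
  - intros l h1 h2. unfold modD. destruct (Nat.eqb_spec l i); try lia.
    destruct (Nat.eqb_spec l (S i)); try lia. ring.
  - unfold modD. rewrite !eqb_self. destruct (Nat.eqb_spec i (S i)); try lia.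
    destruct (Nat.eqb_spec (S i) i); try lia.
    rewrite !(Pe1_Q M lam K) by auto.
    pose proof (hnn i hi).
    replace (M + (D i + u + 0) + lam) with (M + D (S i) + lam) by (unfold u; ring).
    replace (M + (D (S i) + 0 + - u) + lam) with (M + D i + lam) by (unfold u; ring).
    pose proof (Q_decr K (M + D i + lam) (M + D (S i) + lam) ltac:(lra) ltac:(lra)).
    pose proof (pow_lt (1/2) i ltac:(lra)).
    simpl pow. nra.
Qed.

End F.

Theorem lemma1 (beta T lambda BM : R) (Delta : nat -> R)
  (hbeta : 0 < beta) (hT : 0 < T) (hlambda : 0 < lambda)
  (hBM0 : 0 < BM) (hBM1 : BM < beta * T)
  (hopt : optimal (beta * T) lambda BM Delta) :
  forall i : nat, (1 <= i)%nat -> 0 <= Delta i /\ Delta (S i) <= Delta i.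
Proof.
  assert (hM : 0 < beta * T) by (apply Rmult_lt_0_compat; auto).
  assert (hT0 : 0 < Tth (beta * T) lambda).
  { unfold Tth. apply Rdiv_lt_0_compat; auto. apply lnpos; auto. }
  destruct (K_exists _ hT0) as [K hK].
  intros i hi. split.
  - apply (nonneg (beta * T) lambda BM K); auto.
  - apply (decr (beta * T) lambda BM K); auto.
Qed.
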